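(* Let $H_1\in\mathbb{F}_2^{r_1\times n_1}$ and $H_2\in\mathbb{F}_2^{r_2\times n_2}$ be arbitrary binary matrices (rows may be linearly dependent), and let $\mathcal{Q}$ be the hypergraph product code of $H_1$ and $H_2$ on $n=n_1n_2+r_1r_2$ qubits, with $X$-check matrix $H_X=\big(H_1\otimes I_{n_2}\ \big|\ I_{r_1}\otimes H_2^T\big)$ and $Z$-check matrix $H_Z=\big(I_{n_1}\otimes H_2\ \big|\ H_1^T\otimes I_{r_2}\big)$. Let $d$ be the distance of $\mathcal{Q}$. Suppose every row of $H_Z$ and of $H_X$ is measured with its own ancilla qubit by a sequence of two-qubit gates applied in an arbitrary order to the qubits in its support. Then, for every choice of these orders, the effective distance of $\mathcal{Q}$ is also $d$.
   Context: Vectors in $\mathbb{F}_2^{n}$ are indexed so that the first $n_1n_2$ coordinates correspond to ''bit-type'' qubits (indexed by pairs of a column of $H_1$ and a column of $H_2$) and the last $r_1r_2$ to ''check-type'' qubits (indexed by pairs of a row of $H_1$ and a row of $H_2$). Each row of $H_X$ (resp. $H_Z$) defines an $X$-type (resp. $Z$-type) stabilizer generator acting as $X$ (resp. $Z$) on the qubits where the row is $1$; these commute since $H_XH_Z^T=0$. The distance $d$ is the minimum Hamming weight of a vector in $\big(\ker H_X\setminus \mathrm{Im}\,H_Z^T\big)\cup\big(\ker H_Z\setminus \mathrm{Im}\,H_X^T\big)$ (i.e. of a nontrivial logical $Z$ or $X$ operator), with $d=\infty$ if this set is empty. Fault model: a fault is either (i) a single-qubit Pauli error on a data qubit, or (ii)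 an error on the ancilla during the measurement of one stabilizer generator, which propagates to the data qubits: an ancilla error during the measurement of a $Z$-type (resp. $X$-type) generator with support $S$ produces a $Z$ (resp. $X$) error on a subset of $S$ (the possible subsets depend on the gate order; the analysis allows any subset of $S$). A $Y$ error on an ancilla propagates as either an $X$- or a $Z$-type error, so it is covered by (ii). The resulting data-qubit error is the product of the errors produced by all faults. The effective distance (for the given code and measurement circuits) is the minimum number of faults whose resulting data-qubit error is an undetectable logical error, i.e. its $X$-part lies in $\ker H_Z\setminus\mathrm{Im}\,H_X^T$ or its $Z$-part lies in $\ker H_X\setminus\mathrm{Im}\,H_Z^T$, while it commutes with all stabilizers. *)

(* Defs.v *)
From mathcomp Require Import all_boot all_algebra.
Set Implicit Arguments. Unset Strict Implicit. Unset Printing Implicit Defensive.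
Import GRing.Theory.
Local Open Scope ring_scope.

(* Qubits of the hypergraph product code: "bit-type" qubits indexed by a pair
   (column of H1, column of H2), then "check-type" qubits indexed by a pair
   (row of H1, row of H2).  n = n1*n2 + r1*r2. *)
Definition hqubit (r1 n1 r2 n2 : nat) : finType :=
  (('I_n1 * 'I_n2) + ('I_r1 * 'I_r2))%type.

(* X checks: rows of H_X = (H1 (x) I_n2 | I_r1 (x) H2^T), indexed by ('I_r1 * 'I_n2). *)
Definition hxgen (r1 n1 r2 n2 : nat) : finType := ('I_r1 * 'I_n2)%type.
(* Z checks: rows of H_Z = (I_n1 (x) H2 | H1^T (x) I_r2), indexed by ('I_n1 * 'I_r2). *)
Definition hzgen (r1 n1 r2 n2 : nat) : finType := ('I_n1 * 'I_r2)%type.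

Definition HX r1 n1 r2 n2 (H1 : 'M['F_2]_(r1, n1)) (H2 : 'M['F_2]_(r2, n2))
  (c : hxgen r1 n1 r2 n2) (q : hqubit r1 n1 r2 n2) : 'F_2 :=
  match q with
  | inl (a, b) => H1 c.1 a * (c.2 == b)%:R
  | inr (a, b) => (c.1 == a)%:R * H2 b c.2
  end.

Definition HZ r1 n1 r2 n2 (H1 : 'M['F_2]_(r1, n1)) (H2 : 'M['F_2]_(r2, n2))
  (c : hzgen r1 n1 r2 n2) (q : hqubit r1 n1 r2 n2) : 'F_2 :=
  match q with
  | inl (a, b) => (c.1 == a)%:R * H2 c.2 b
  | inr (a, b) => H1 a c.1 * (c.2 == b)%:R
  end.

Definition in_ker (C Q : finType) (H : C -> Q -> 'F_2) (v : {ffun Q -> 'F_2}) : Prop :=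
  forall c, \sum_q H c q * v q = 0.

Definition in_imT (C Q : finType) (H : C -> Q -> 'F_2) (v : {ffun Q -> 'F_2}) : Prop :=
  exists u : {ffun C -> 'F_2}, forall q, v q = \sum_c u c * H c q.

Definition weight (Q : finType) (v : {ffun Q -> 'F_2}) : nat := #|[set q | v q != 0]|.

Definition nontrivial_logical (CX CZ Q : finType)
  (hx : CX -> Q -> 'F_2) (hz : CZ -> Q -> 'F_2) (v : {ffun Q -> 'F_2}) : Prop :=
  (in_ker hx v /\ ~ in_imT hz v) \/ (in_ker hz v /\ ~ in_imT hx v).

(* "d is the minimum of the nat-set P", with d = None meaning infinity (P empty). *)
Definition is_min_nat (P : nat -> Prop) (d : option nat) : Prop :=
  match d with
  | Some m => P m /\ (forall k, P k -> (m <= k)%N)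
  | None => forall k, ~ P k
  end.

Definition code_distance (CX CZ Q : finType)
  (hx : CX -> Q -> 'F_2) (hz : CZ -> Q -> 'F_2) (d : option nat) : Prop :=
  is_min_nat (fun k => exists v, nontrivial_logical hx hz v /\ weight v = k) d.

(* Faults (single fault locations):
   DataX/DataY/DataZ q : a single-qubit Pauli X / Y / Z error on data qubit q;
   AncX g T : an ancilla error during the measurement of X-type generator g,
              propagating to an X error on the data qubits of T;
   AncZ g T : same for Z-type generator g, propagating to a Z error on T. *)
Inductive fault (CX CZ Q : finType) :=
  | DataX of Q | DataY of Q | DataZ of Q
  | AncX of CX & {set Q}
  | AncZ of CZ & {set Q}.

Definition indic (Q : finType) (T : {set Q}) : {ffun Q -> 'F_2} :=
  [ffun q => (q \in T)%:R].

Definition fault_error (CX CZ Q : finType) (f : fault CX CZ Q)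
  : {ffun Q -> 'F_2} * {ffun Q -> 'F_2} :=
  match f with
  | DataX q => (indic [set q], 0)
  | DataY q => (indic [set q], indic [set q])
  | DataZ q => (0, indic [set q])
  | AncX _ T => (indic T, 0)
  | AncZ _ T => (0, indic T)
  end.

(* Total error: product of the Paulis = sum of the binary vectors. *)
Definition total_error (CX CZ Q : finType) (fs : seq (fault CX CZ Q))
  : {ffun Q -> 'F_2} * {ffun Q -> 'F_2} :=
  ((\sum_(f <- fs) (fault_error f).1), (\sum_(f <- fs) (fault_error f).2)).

(* Measurement circuit of a generator: the order in which its two-qubit gates
   (one per support qubit, with its own ancilla) touch the qubits of its
   support.  Following the fault model of the paper, an ancilla fault during
   the measurement of generator c with support S may propagate to an error on
   ANY subset of S (the subsets actually reachable for a given gate order are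
   among these; the analysis allows any subset). *)
Definition valid_order (C Q : finType) (H : C -> Q -> 'F_2) (ord : C -> seq Q) : Prop :=
  forall c, uniq (ord c) /\ (forall q, (q \in ord c) = (H c q != 0)).

Definition hook_set (C Q : finType) (ord : C -> seq Q) (c : C) (T : {set Q}) : Prop :=
  forall q, q \in T -> q \in ord c.

Definition admissible_fault (CX CZ Q : finType)
  (ordX : CX -> seq Q) (ordZ : CZ -> seq Q) (f : fault CX CZ Q) : Prop :=
  match f with
  | AncX g T => hook_set ordX g T
  | AncZ g T => hook_set ordZ g T
  | _ => True
  end.

Fixpoint all_admissible (CX CZ Q : finType)
  (ordX : CX -> seq Q) (ordZ : CZ -> seq Q) (fs : seq (fault CX CZ Q)) : Prop :=
  match fs with
  | [::] => True
  | f :: fs' => admissible_fault ordX ordZ f /\ all_admissible ordX ordZ fs'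
  end.

Definition undetectable_logical (CX CZ Q : finType)
  (hx : CX -> Q -> 'F_2) (hz : CZ -> Q -> 'F_2)
  (e : {ffun Q -> 'F_2} * {ffun Q -> 'F_2}) : Prop :=
  in_ker hz e.1 /\ in_ker hx e.2 /\ (~ in_imT hx e.1 \/ ~ in_imT hz e.2).

Definition effective_distance (CX CZ Q : finType)
  (hx : CX -> Q -> 'F_2) (hz : CZ -> Q -> 'F_2)
  (ordX : CX -> seq Q) (ordZ : CZ -> seq Q) (d : option nat) : Prop :=
  is_min_nat (fun k => exists fs : seq (fault CX CZ Q),
                 size fs = k /\ all_admissible ordX ordZ fs /\
                 undetectable_logical hx hz (total_error fs)) d.

(* Main.v *)
Require Import Defs.
From mathcomp Require Import all_boot all_algebra.
From Stdlib Require Import Classical_Prop.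
Set Implicit Arguments. Unset Strict Implicit. Unset Printing Implicit Defensive.
Import GRing.Theory.
Local Open Scope ring_scope.


Lemma kill_ker_sub (F : fieldType) r m n (A : 'M[F]_(r, n)) (B : 'M[F]_(m, n)) :
  (forall y : 'cV_n, A *m y = 0 -> B *m y = 0) -> (B <= A)%MS.
Proof.
move=> hyp.
set K := kermx A^T.
have AK : A *m K^T = 0 by rewrite -[A]trmxK -trmx_mul mulmx_ker trmx0.
have BK : B *m K^T = 0.
  apply/matrixP => i j; rewrite !mxE.
  have := hyp (K^T *m delta_mx j 0).
  rewrite !mulmxA AK mul0mx => /(_ erefl) /matrixP /(_ i 0).
  rewrite -colE => H; have := H; rewrite !mxE. done.
have sAK : (A <= kermx K^T)%MS by apply/sub_kermxP.
have eq : (A == kermx K^T)%MS.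
  rewrite -(mxrank_leqif_eq sAK) mxrank_ker mxrank_tr /K mxrank_ker mxrank_tr.
  by rewrite subKn // rank_leq_col.
apply: submx_trans (_ : (B <= kermx K^T)%MS) _; first by apply/sub_kermxP.
by case/andP: eq.
Qed.

Lemma core (F : fieldType) r1 n1 r2 n2 (H1 : 'M[F]_(r1,n1)) (H2 : 'M[F]_(r2,n2))
  (Eb : 'M[F]_(n1,n2)) (Ec : 'M[F]_(r1,r2)) :
  H1 *m Eb = Ec *m H2 ->
  (forall y : 'cV_n2, H2 *m y = 0 -> Eb *m y = 0) ->
  (forall z : 'rV_r1, z *m H1 = 0 -> z *m Ec = 0) ->
  exists A : 'M_(n1,r2), Eb = A *m H2 /\ Ec = H1 *m A.
Proof.
move=> hk hy hz.
have /submxP [A0 EA0] := kill_ker_sub hy.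
have : (Ec^T <= H1^T)%MS.
  apply: kill_ker_sub => y Hy.
  have := hz y^T; rewrite -[y^T *m H1]trmxK trmx_mul !trmxK Hy trmx0 => /(_ erefl) Hz.
  by rewrite -[y]trmxK -trmx_mul Hz trmx0.
case/submxP => C' EC'.
have EC : Ec = H1 *m C'^T by rewrite -[Ec]trmxK EC' trmx_mul !trmxK.
set M := C'^T - A0.
have HM : H1 *m M *m H2 = 0.
  by rewrite /M mulmxBr mulmxBl -EC -mulmxA -EA0 hk subrr.
set K1 := kermx H1^T.
have sR : (H2^T *m M^T <= K1)%MS.
  apply/sub_kermxP; rewrite -trmx_mul -trmx_mul mulmxA HM trmx0 //.
set S := M^T *m pinvmx K1 *m K1.
have e1 : H2^T *m S = H2^T *m M^T.
  by rewrite /S mulmxA mulmxA; apply: mulmxKpV.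
have e2 : S *m H1^T = 0 by rewrite /S -mulmxA /K1 mulmx_ker mulmx0.
clearbody S.
exists (A0 + M - S^T); split.
  rewrite mulmxBl mulmxDl -EA0.
  have -> : S^T *m H2 = M *m H2.
    have -> : S^T *m H2 = (H2^T *m S)^T by rewrite trmx_mul !trmxK.
    by rewrite e1 trmx_mul !trmxK.
  by rewrite addrK.
rewrite mulmxBr mulmxDr.
have -> : H1 *m S^T = 0.
  have -> : H1 *m S^T = (S *m H1^T)^T by rewrite trmx_mul !trmxK.
  by rewrite e2 trmx0.
by rewrite subr0 /M mulmxBr addrC subrK.
Qed.

Lemma f2_neq0 (x : 'F_2) : x != 0 -> x = 1.
Proof. move: x => [[|[|n]] hn] //= _; apply/val_inj => //. Qed.

Lemma f2_addxx (x : 'F_2) : x + x = 0.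
Proof. move: x => [[|[|n]] hn] //=; apply/val_inj => //. Qed.

Lemma f2_add0 (x y : 'F_2) : x + y = 0 -> x = y.
Proof. by move=> h; rewrite -[y]add0r -h -addrA f2_addxx addr0. Qed.

Lemma sum_one (I : finType) (i0 : I) (F : I -> 'F_2) :
  (forall i, i != i0 -> F i = 0) -> \sum_i F i = F i0.
Proof. by move=> h; rewrite (bigD1 i0) //= big1 ?addr0. Qed.
Arguments sum_one {I} i0 {F}.

Lemma sum_neq0 (I : finType) (F : I -> 'F_2) : \sum_i F i != 0 -> exists i, F i != 0.
Proof.
move=> h; case: (pickP (fun i => F i != 0)) => [i hi | H]; first by exists i.
move/eqP: h; case; apply: big1 => i _; by move: (H i) => /negbFE /eqP.
Qed.

Lemma sumQ r1 n1 r2 n2 (F : hqubit r1 n1 r2 n2 -> 'F_2) :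
  \sum_q F q = \sum_a \sum_b F (inl (a,b)) + \sum_i \sum_j F (inr (i,j)).
Proof.
rewrite big_sumType /=; congr (_ + _); rewrite pair_bigA; by apply: eq_bigr => [[]].
Qed.

Lemma sumP2 (A B : finType) (F : (A * B)%type -> 'F_2) :
  \sum_c F c = \sum_a \sum_b F (a,b).
Proof. by rewrite pair_bigA; apply: eq_bigr => [[]]. Qed.

Lemma indic_neq0 (Q : finType) (T : {set Q}) q : indic T q != 0 -> q \in T.
Proof. by rewrite ffunE; case: (q \in T). Qed.

Lemma nontriv_pair (C Q : finType) (h : C -> Q -> 'F_2) (v l : {ffun Q -> 'F_2}) :
  in_ker h l -> \sum_q v q * l q = 1 -> ~ in_imT h v.
Proof.
move=> hl hp [u hu]; move: hp.
under eq_bigr do rewrite hu mulr_suml.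
rewrite exchange_big big1 => [|c _]; first by move/eqP; rewrite eq_sym oner_eq0.
by under eq_bigr do rewrite -mulrA; rewrite -mulr_sumr hl mulr0.
Qed.

Lemma count_supp (CX CZ Q K : finType) (ordX : CX -> seq Q) (ordZ : CZ -> seq Q)
  (fs : seq (fault CX CZ Q)) (E : fault CX CZ Q -> {ffun Q -> 'F_2}) (L : K -> Q -> 'F_2) :
  (forall f, admissible_fault ordX ordZ f -> forall q q' k k',
      E f q != 0 -> E f q' != 0 -> L k q != 0 -> L k' q' != 0 -> k = k') ->
  all_admissible ordX ordZ fs ->
  (#|[set k | (\sum_q (\sum_(f <- fs) E f) q * L k q != 0)%R]| <= size fs)%N.
Proof.
move=> hE; elim: fs => [|f fs IH] /=.
  move=> _; rewrite leqn0 cards_eq0; apply/eqP/setP => k; rewrite !inE.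
  by rewrite big1 ?eqxx // => q _; rewrite big_nil ffunE mul0r.
case=> af /IH hfs.
set A := [set k | \sum_q E f q * L k q != 0].
set B := [set k | \sum_q (\sum_(f <- fs) E f) q * L k q != 0].
have sub : [set k | \sum_q (\sum_(f <- f :: fs) E f) q * L k q != 0] \subset A :|: B.
  apply/subsetP => k; rewrite !inE big_cons.
  rewrite (eq_bigr (fun q => E f q * L k q + (\sum_(j <- fs) E j) q * L k q)); last first.
    by move=> q _; rewrite ffunE mulrDl.
  rewrite big_split /=; apply: contraR; rewrite negb_or !negbK => /andP[/eqP -> /eqP ->].
  by rewrite addr0.
have hA : (#|A| <= 1)%N.
  apply/card_le1_eqP => k k'; rewrite !inE => /sum_neq0 [q hq] /sum_neq0 [q' hq'].
  move: hq hq'; rewrite !mulf_eq0 !negb_or => /andP[h1 h2] /andP[h3 h4].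
  by symmetry; apply: (hE f af q q').
apply: (leq_trans (subset_leq_card sub)).
apply: (leq_trans (leq_card_setU A B)).
by rewrite -add1n leq_add.
Qed.

Lemma cond_Z (CX CZ Q K : finType) (hz : CZ -> Q -> 'F_2) (ordX : CX -> seq Q) (ordZ : CZ -> seq Q)
  (L : K -> Q -> 'F_2) :
  valid_order hz ordZ ->
  (forall k k' q, L k q != 0 -> L k' q != 0 -> k = k') ->
  (forall g k k' q q', hz g q != 0 -> hz g q' != 0 -> L k q != 0 -> L k' q' != 0 -> k = k') ->
  forall f, admissible_fault ordX ordZ f -> forall q q' k k',
    (fault_error f).2 q != 0 -> (fault_error f).2 q' != 0 -> L k q != 0 -> L k' q' != 0 -> k = k'.
Proof.
move=> vo h1 h2 [p|p|p|g T|g T] /= af q q' k k';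
  rewrite /= ?[(0 : {ffun Q -> 'F_2}) _]ffunE ?eqxx //.
- by move=> /indic_neq0; rewrite inE => /eqP -> /indic_neq0; rewrite inE => /eqP ->; apply: h1.
- by move=> /indic_neq0; rewrite inE => /eqP -> /indic_neq0; rewrite inE => /eqP ->; apply: h1.
- move=> /indic_neq0 /af hq /indic_neq0 /af hq'; apply: (h2 g).
  + by have [_ <-] := vo g.
  + by have [_ <-] := vo g.
Qed.

Lemma cond_X (CX CZ Q K : finType) (hx : CX -> Q -> 'F_2) (ordX : CX -> seq Q) (ordZ : CZ -> seq Q)
  (L : K -> Q -> 'F_2) :
  valid_order hx ordX ->
  (forall k k' q, L k q != 0 -> L k' q != 0 -> k = k') ->
  (forall g k k' q q', hx g q != 0 -> hx g q' != 0 -> L k q != 0 -> L k' q' != 0 -> k = k') ->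
  forall f, admissible_fault ordX ordZ f -> forall q q' k k',
    (fault_error f).1 q != 0 -> (fault_error f).1 q' != 0 -> L k q != 0 -> L k' q' != 0 -> k = k'.
Proof.
move=> vo h1 h2 [p|p|p|g T|g T] /= af q q' k k';
  rewrite /= ?[(0 : {ffun Q -> 'F_2}) _]ffunE ?eqxx //.
- by move=> /indic_neq0; rewrite inE => /eqP -> /indic_neq0; rewrite inE => /eqP ->; apply: h1.
- by move=> /indic_neq0; rewrite inE => /eqP -> /indic_neq0; rewrite inE => /eqP ->; apply: h1.
- move=> /indic_neq0 /af hq /indic_neq0 /af hq'; apply: (h2 g).
  + by have [_ <-] := vo g.
  + by have [_ <-] := vo g.
Qed.

Lemma b2R1 : ((true : nat)%:R : 'F_2) = 1. Proof. by []. Qed.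

Definition Ebm r1 n1 r2 n2 (e : {ffun hqubit r1 n1 r2 n2 -> 'F_2}) : 'M['F_2]_(n1,n2) :=
  \matrix_(a,b) e (inl (a,b)).
Definition Ecm r1 n1 r2 n2 (e : {ffun hqubit r1 n1 r2 n2 -> 'F_2}) : 'M['F_2]_(r1,r2) :=
  \matrix_(i,j) e (inr (i,j)).

Lemma kerX_mx r1 n1 r2 n2 (H1 : 'M['F_2]_(r1,n1)) (H2 : 'M['F_2]_(r2,n2)) e :
  in_ker (HX H1 H2) e -> H1 *m Ebm e = Ecm e *m H2.
Proof.
move=> h; apply/matrixP => i b; rewrite !mxE.
have := h (i,b); rewrite sumQ /=.
rewrite (eq_bigr (fun a => H1 i a * e (inl (a,b)))) => [|a _]; last first.
  rewrite (sum_one b) ?eqxx ?b2R1 ?mulr1 // => b' nb.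
  by rewrite eq_sym (negbTE nb) mulr0 mul0r.
rewrite (sum_one i) => [|i' ni]; last first.
  by apply: big1 => j _; rewrite eq_sym (negbTE ni) !mul0r.
rewrite eqxx b2R1.
move/f2_add0 => H'; rewrite /Ebm /Ecm.
rewrite (eq_bigr (fun a => H1 i a * e (inl (a,b)))) ?H' => [|a _]; last by rewrite mxE.
by apply: eq_bigr => j _; rewrite mxE mul1r mulrC.
Qed.

Lemma exists_nz_col n (x : 'cV['F_2]_n) : x != 0 -> exists a, x a 0 != 0.
Proof.
move=> Hne; case: (pickP (fun a => x a 0 != 0)) => [a ha|H]; first by exists a.
move/eqP: Hne; case; apply/matrixP => a j; rewrite (ord1 j) mxE.
by move: (H a) => /negbFE/eqP.
Qed.

Lemma exists_nz_row n (x : 'rV['F_2]_n) : x != 0 -> exists a, x 0 a != 0.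
Proof.
move=> Hne; case: (pickP (fun a => x 0 a != 0)) => [a ha|H]; first by exists a.
move/eqP: Hne; case; apply/matrixP => j a; rewrite (ord1 j) mxE.
by move: (H a) => /negbFE/eqP.
Qed.

Lemma Zcase_y r1 n1 r2 n2 (H1 : 'M['F_2]_(r1,n1)) (H2 : 'M['F_2]_(r2,n2)) ordX ordZ
  (fs : seq (fault (hxgen r1 n1 r2 n2) (hzgen r1 n1 r2 n2) (hqubit r1 n1 r2 n2)))
  (y : 'cV_n2) :
  valid_order (HZ H1 H2) ordZ -> all_admissible ordX ordZ fs ->
  H1 *m Ebm (total_error fs).2 = Ecm (total_error fs).2 *m H2 ->
  H2 *m y = 0 -> Ebm (total_error fs).2 *m y != 0 ->
  exists v, nontrivial_logical (HX H1 H2) (HZ H1 H2) v /\ (weight v <= size fs)%N.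
Proof.
move=> vo adm hk Hy Hne.
set e := (total_error fs).2 in hk Hne.
set x := Ebm e *m y.
have [a0 Ha0] := exists_nz_col Hne.
have [b0 Hb0] : exists b0, y b0 0 != 0.
  case: (pickP (fun b => y b 0 != 0)) => [b hb|H]; first by exists b.
  move: Ha0; rewrite /x mxE big1 ?eqxx // => b _.
  by move: (H b) => /negbFE/eqP ->; rewrite mulr0.
have Hx1 : H1 *m x = 0 by rewrite /x mulmxA hk -mulmxA Hy mulmx0.
pose v : {ffun hqubit r1 n1 r2 n2 -> 'F_2} := [ffun q =>
  match q with inl (a,b) => x a 0 * (b == b0)%:R | inr _ => 0 end].
pose l : {ffun hqubit r1 n1 r2 n2 -> 'F_2} := [ffun q =>
  match q with inl (a,b) => (a == a0)%:R * y b 0 | inr _ => 0 end].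
exists v; split.
  left; split.
    move=> [i b]; rewrite sumQ /= [X in _ + X]big1 ?addr0 => [|i' _]; last first.
      by apply: big1 => j _; rewrite ffunE mulr0.
    transitivity (\sum_a H1 i a * x a 0 * (b == b0)%:R).
      apply: eq_bigr => a _; rewrite (sum_one b) ?ffunE ?eqxx ?b2R1 ?mulr1 ?mulrA // => b' nb.
      by rewrite eq_sym (negbTE nb) mulr0 mul0r.
    rewrite -mulr_suml; have := congr1 (fun M : 'M['F_2]_(r1,1) => M i 0) Hx1.
    by rewrite !mxE => ->; rewrite mul0r.
  apply: (nontriv_pair (l:=l)).
    move=> [a j]; rewrite sumQ /= [X in _ + X]big1 ?addr0 => [|i _]; last first.
      by apply: big1 => j' _; rewrite ffunE mulr0.
    rewrite (sum_one a) => [|a' na]; last first.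
      by apply: big1 => b _; rewrite eq_sym (negbTE na) !mul0r.
    rewrite eqxx b2R1.
    under eq_bigr do rewrite ffunE mul1r mulrCA.
    rewrite -mulr_sumr; have := congr1 (fun M : 'M['F_2]_(r2,1) => M j 0) Hy.
    by rewrite !mxE => ->; rewrite mulr0.
  rewrite sumQ /= [X in _ + X]big1 ?addr0 => [|i _]; last first.
    by apply: big1 => j' _; rewrite !ffunE mulr0.
  rewrite (sum_one a0) => [|a' na]; last first.
    by apply: big1 => b _; rewrite !ffunE (negbTE na) mul0r mulr0.
  rewrite (sum_one b0) => [|b' nb]; last first.
    by rewrite !ffunE (negbTE nb) mulr0 mul0r.
  by rewrite !ffunE !eqxx !b2R1 mulr1 mul1r (f2_neq0 Ha0) (f2_neq0 Hb0) mulr1.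
pose L : 'I_n1 -> hqubit r1 n1 r2 n2 -> 'F_2 := fun a q =>
  match q with inl (a',b) => (a' == a)%:R * y b 0 | inr _ => 0 end.
have cnt := @count_supp _ _ _ _ ordX ordZ fs (fun f => (fault_error f).2) L.
have hxL : forall a, x a 0 = \sum_q (\sum_(f <- fs) (fault_error f).2) q * L a q.
  move=> a; rewrite sumQ /= [X in _ + X]big1 ?addr0 => [|i _]; last first.
    by apply: big1 => j _; rewrite mulr0.
  rewrite (sum_one a) => [|a' na]; last first.
    by apply: big1 => b _; rewrite (negbTE na) mul0r mulr0.
  rewrite /x mxE; apply: eq_bigr => b _; by rewrite eqxx b2R1 mul1r mxE.
have sub : [set q | v q != 0] \subset
   (fun a => (inl (a,b0) : hqubit r1 n1 r2 n2)) @: [set a | x a 0 != 0].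
  apply/subsetP => -[[a b]|[i j]]; rewrite inE ffunE //.
  case: (eqVneq b b0) => [->|nb]; last by rewrite mulr0 eqxx.
  rewrite ?eqxx ?b2R1 mulr1 => hx; apply/imsetP; exists a => //; by rewrite inE.
rewrite /weight (leq_trans (subset_leq_card sub)) // (leq_trans (leq_imset_card _ _)) //.
have -> : [set a | x a 0 != 0] =
   [set k | \sum_q (\sum_(f <- fs) (fault_error f).2) q * L k q != 0].
  by apply/setP => a; rewrite !inE hxL.
apply: cnt => //.
apply: (cond_Z vo).
  move=> k k' [[a b]|[i j]] //=.
  rewrite mulf_eq0 negb_or => /andP[/eqP h _]; rewrite mulf_eq0 negb_or => /andP[/eqP h' _].
  by move: h h'; case: eqP => // ->; case: eqP.
move=> g k k' [[a b]|[i j]] [[a' b']|[i' j']] //=.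
rewrite !mulf_eq0 !negb_or => /andP[/eqP h1 _] /andP[/eqP h2 _] /andP[/eqP h3 _] /andP[/eqP h4 _].
move: h1 h2 h3 h4; do 4 case: eqP => //; by move=> -> -> -> .
Qed.

Lemma Zcase_z r1 n1 r2 n2 (H1 : 'M['F_2]_(r1,n1)) (H2 : 'M['F_2]_(r2,n2)) ordX ordZ
  (fs : seq (fault (hxgen r1 n1 r2 n2) (hzgen r1 n1 r2 n2) (hqubit r1 n1 r2 n2)))
  (z : 'rV_r1) :
  valid_order (HZ H1 H2) ordZ -> all_admissible ordX ordZ fs ->
  H1 *m Ebm (total_error fs).2 = Ecm (total_error fs).2 *m H2 ->
  z *m H1 = 0 -> z *m Ecm (total_error fs).2 != 0 ->
  exists v, nontrivial_logical (HX H1 H2) (HZ H1 H2) v /\ (weight v <= size fs)%N.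
Proof.
move=> vo adm hk Hz Hne.
set e := (total_error fs).2 in hk Hne.
set w := z *m Ecm e.
have [j0 Hj0] := exists_nz_row Hne.
have [i0 Hi0] : exists i0, z 0 i0 != 0.
  case: (pickP (fun i => z 0 i != 0)) => [i hi|H]; first by exists i.
  move: Hj0; rewrite /w mxE big1 ?eqxx // => i _.
  by move: (H i) => /negbFE/eqP ->; rewrite mul0r.
have Hw : w *m H2 = 0 by rewrite /w -mulmxA -hk mulmxA Hz mul0mx.
pose v : {ffun hqubit r1 n1 r2 n2 -> 'F_2} := [ffun q =>
  match q with inr (i,j) => (i == i0)%:R * w 0 j | inl _ => 0 end].
pose l : {ffun hqubit r1 n1 r2 n2 -> 'F_2} := [ffun q =>
  match q with inr (i,j) => z 0 i * (j == j0)%:R | inl _ => 0 end].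
exists v; split.
  left; split.
    move=> [i b]; rewrite sumQ /= [X in X + _]big1 ?add0r => [|a _]; last first.
      by apply: big1 => b' _; rewrite ffunE mulr0.
    rewrite (sum_one i) => [|i' ni]; last first.
      by apply: big1 => j _; rewrite eq_sym (negbTE ni) !mul0r.
    rewrite eqxx b2R1.
    under eq_bigr do rewrite ffunE mul1r mulrCA.
    rewrite -mulr_sumr; have := congr1 (fun M : 'M['F_2]_(1,n2) => M 0 b) Hw.
    rewrite !mxE => H; rewrite (eq_bigr (fun j => w 0 j * H2 j b)) ?H ?mulr0 //.
    by move=> j _; rewrite mulrC.
  apply: (nontriv_pair (l:=l)).
    move=> [a j]; rewrite sumQ /= [X in X + _]big1 ?add0r => [|a' _]; last first.
      by apply: big1 => b _; rewrite ffunE mulr0.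
    transitivity (\sum_i z 0 i * H1 i a * (j == j0)%:R).
      apply: eq_bigr => i _; rewrite (sum_one j) ?ffunE ?eqxx ?b2R1 ?mulr1 // => [|j' nj].
        by rewrite mulrA [H1 i a * _]mulrC.
      by rewrite eq_sym (negbTE nj) mulr0 mul0r.
    rewrite -mulr_suml; have := congr1 (fun M : 'M['F_2]_(1,n1) => M 0 a) Hz.
    by rewrite !mxE => ->; rewrite mul0r.
  rewrite sumQ /= [X in X + _]big1 ?add0r => [|a _]; last first.
    by apply: big1 => b _; rewrite !ffunE mulr0.
  rewrite (sum_one i0) => [|i' ni]; last first.
    by apply: big1 => j _; rewrite !ffunE (negbTE ni) !mul0r.
  rewrite (sum_one j0) => [|j' nj]; last first.
    by rewrite !ffunE (negbTE nj) !mulr0.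
  by rewrite !ffunE !eqxx !b2R1 mulr1 mul1r (f2_neq0 Hj0) (f2_neq0 Hi0) mulr1.
pose L : 'I_r2 -> hqubit r1 n1 r2 n2 -> 'F_2 := fun j q =>
  match q with inr (i,j') => z 0 i * (j' == j)%:R | inl _ => 0 end.
have cnt := @count_supp _ _ _ _ ordX ordZ fs (fun f => (fault_error f).2) L.
have hxL : forall j, w 0 j = \sum_q (\sum_(f <- fs) (fault_error f).2) q * L j q.
  move=> j; rewrite sumQ /= [X in X + _]big1 ?add0r => [|a _]; last first.
    by apply: big1 => b _; rewrite mulr0.
  rewrite /w mxE; apply: eq_bigr => i _.
  rewrite (sum_one j) => [|j' nj]; last by rewrite (negbTE nj) !mulr0.
  by rewrite ?eqxx ?b2R1 mulr1 mxE mulrC.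
have sub : [set q | v q != 0] \subset
   (fun j => (inr (i0,j) : hqubit r1 n1 r2 n2)) @: [set j | w 0 j != 0].
  apply/subsetP => -[[a b]|[i j]]; rewrite inE ffunE //=.
  case: (eqVneq i i0) => [->|ni]; last by rewrite mul0r eqxx.
  rewrite ?eqxx ?b2R1 mul1r => hx; apply/imsetP; exists j => //; by rewrite inE.
rewrite /weight (leq_trans (subset_leq_card sub)) // (leq_trans (leq_imset_card _ _)) //.
have -> : [set j | w 0 j != 0] =
   [set k | \sum_q (\sum_(f <- fs) (fault_error f).2) q * L k q != 0].
  by apply/setP => j; rewrite !inE hxL.
apply: cnt => //.
apply: (cond_Z vo).
  move=> k k' [[a b]|[i j]] //=.
  rewrite mulf_eq0 negb_or => /andP[_ /eqP h]; rewrite mulf_eq0 negb_or => /andP[_ /eqP h'].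
  by move: h h'; case: eqP => // ->; case: eqP.
move=> g k k' [[a b]|[i j]] [[a' b']|[i' j']] //=.
rewrite !mulf_eq0 !negb_or => /andP[_ /eqP h1] /andP[_ /eqP h2] /andP[_ /eqP h3] /andP[_ /eqP h4].
move: h1 h2 h3 h4; do 4 case: eqP => //; by move=> -> -> -> .
Qed.

Lemma kerZ_mx r1 n1 r2 n2 (H1 : 'M['F_2]_(r1,n1)) (H2 : 'M['F_2]_(r2,n2)) e :
  in_ker (HZ H1 H2) e -> H2 *m (Ebm e)^T = (Ecm e)^T *m H1.
Proof.
move=> h; apply/matrixP => j a; rewrite !mxE.
have := h (a,j); rewrite sumQ /=.
rewrite (sum_one a) => [|a' na]; last first.
  by apply: big1 => b _; rewrite eq_sym (negbTE na) !mul0r.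
rewrite eqxx b2R1.
rewrite (eq_bigr (fun i => H1 i a * e (inr (i,j)))) => [|i _]; last first.
  rewrite (sum_one j) ?eqxx ?b2R1 ?mulr1 // => j' nj.
  by rewrite eq_sym (negbTE nj) mulr0 mul0r.
move/f2_add0 => H'; rewrite /Ebm /Ecm.
rewrite (eq_bigr (fun b => H2 j b * e (inl (a,b)))) => [|b _]; last by rewrite !mxE.
rewrite (eq_bigr (fun b => 1 * H2 j b * e (inl (a,b)))) ?H' => [|b _]; last by rewrite mul1r.
by apply: eq_bigr => i _; rewrite !mxE mulrC.
Qed.

Lemma Xcase_y r1 n1 r2 n2 (H1 : 'M['F_2]_(r1,n1)) (H2 : 'M['F_2]_(r2,n2)) ordX ordZ
  (fs : seq (fault (hxgen r1 n1 r2 n2) (hzgen r1 n1 r2 n2) (hqubit r1 n1 r2 n2)))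
  (y : 'cV_n1) :
  valid_order (HX H1 H2) ordX -> all_admissible ordX ordZ fs ->
  H2 *m (Ebm (total_error fs).1)^T = (Ecm (total_error fs).1)^T *m H1 ->
  H1 *m y = 0 -> (Ebm (total_error fs).1)^T *m y != 0 ->
  exists v, nontrivial_logical (HX H1 H2) (HZ H1 H2) v /\ (weight v <= size fs)%N.
Proof.
move=> vo adm hk Hy Hne.
set e := (total_error fs).1 in hk Hne.
set x := (Ebm e)^T *m y.
have [b0 Hb0] := exists_nz_col Hne.
have [a0 Ha0] : exists a0, y a0 0 != 0.
  case: (pickP (fun a => y a 0 != 0)) => [a ha|H]; first by exists a.
  move: Hb0; rewrite /x mxE big1 ?eqxx // => a _.
  by move: (H a) => /negbFE/eqP ->; rewrite mulr0.
have Hx1 : H2 *m x = 0 by rewrite /x mulmxA hk -mulmxA Hy mulmx0.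
pose v : {ffun hqubit r1 n1 r2 n2 -> 'F_2} := [ffun q =>
  match q with inl (a,b) => (a == a0)%:R * x b 0 | inr _ => 0 end].
pose l : {ffun hqubit r1 n1 r2 n2 -> 'F_2} := [ffun q =>
  match q with inl (a,b) => y a 0 * (b == b0)%:R | inr _ => 0 end].
exists v; split.
  right; split.
    move=> [a j]; rewrite sumQ /= [X in _ + X]big1 ?addr0 => [|i _]; last first.
      by apply: big1 => j' _; rewrite ffunE mulr0.
    rewrite (sum_one a) => [|a' na]; last first.
      by apply: big1 => b _; rewrite eq_sym (negbTE na) !mul0r.
    rewrite eqxx b2R1.
    under eq_bigr do rewrite ffunE mul1r mulrCA.
    rewrite -mulr_sumr; have := congr1 (fun M : 'M['F_2]_(r2,1) => M j 0) Hx1.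
    by rewrite !mxE => ->; rewrite mulr0.
  apply: (nontriv_pair (l:=l)).
    move=> [i b]; rewrite sumQ /= [X in _ + X]big1 ?addr0 => [|i' _]; last first.
      by apply: big1 => j _; rewrite ffunE mulr0.
    transitivity (\sum_a H1 i a * y a 0 * (b == b0)%:R).
      apply: eq_bigr => a _; rewrite (sum_one b) ?ffunE ?eqxx ?b2R1 ?mulr1 ?mulrA // => b' nb.
      by rewrite eq_sym (negbTE nb) mulr0 mul0r.
    rewrite -mulr_suml; have := congr1 (fun M : 'M['F_2]_(r1,1) => M i 0) Hy.
    by rewrite !mxE => ->; rewrite mul0r.
  rewrite sumQ /= [X in _ + X]big1 ?addr0 => [|i _]; last first.
    by apply: big1 => j' _; rewrite !ffunE mulr0.
  rewrite (sum_one a0) => [|a' na]; last first.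
    by apply: big1 => b _; rewrite !ffunE (negbTE na) !mul0r.
  rewrite (sum_one b0) => [|b' nb]; last first.
    by rewrite !ffunE (negbTE nb) !mulr0.
  by rewrite !ffunE !eqxx !b2R1 mulr1 mul1r (f2_neq0 Ha0) (f2_neq0 Hb0) mulr1.
pose L : 'I_n2 -> hqubit r1 n1 r2 n2 -> 'F_2 := fun b q =>
  match q with inl (a,b') => y a 0 * (b' == b)%:R | inr _ => 0 end.
have cnt := @count_supp _ _ _ _ ordX ordZ fs (fun f => (fault_error f).1) L.
have hxL : forall b, x b 0 = \sum_q (\sum_(f <- fs) (fault_error f).1) q * L b q.
  move=> b; rewrite sumQ /= [X in _ + X]big1 ?addr0 => [|i _]; last first.
    by apply: big1 => j _; rewrite mulr0.
  rewrite /x mxE; apply: eq_bigr => a _.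
  rewrite (sum_one b) => [|b' nb]; last by rewrite (negbTE nb) !mulr0.
  by rewrite ?eqxx ?b2R1 mulr1 !mxE.
have sub : [set q | v q != 0] \subset
   (fun b => (inl (a0,b) : hqubit r1 n1 r2 n2)) @: [set b | x b 0 != 0].
  apply/subsetP => -[[a b]|[i j]]; rewrite inE ffunE //=.
  case: (eqVneq a a0) => [->|na]; last by rewrite mul0r eqxx.
  rewrite ?eqxx ?b2R1 mul1r => hx; apply/imsetP; exists b => //; by rewrite inE.
rewrite /weight (leq_trans (subset_leq_card sub)) // (leq_trans (leq_imset_card _ _)) //.
have -> : [set b | x b 0 != 0] =
   [set k | \sum_q (\sum_(f <- fs) (fault_error f).1) q * L k q != 0].
  by apply/setP => b; rewrite !inE hxL.
apply: cnt => //.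
apply: (cond_X vo).
  move=> k k' [[a b]|[i j]] //=.
  rewrite mulf_eq0 negb_or => /andP[_ /eqP h]; rewrite mulf_eq0 negb_or => /andP[_ /eqP h'].
  by move: h h'; case: eqP => // ->; case: eqP.
move=> g k k' [[a b]|[i j]] [[a' b']|[i' j']] //=.
rewrite !mulf_eq0 !negb_or => /andP[_ /eqP h1] /andP[_ /eqP h2] /andP[_ /eqP h3] /andP[_ /eqP h4].
move: h1 h2 h3 h4; do 4 case: eqP => //; by move=> -> -> -> .
Qed.

Lemma Xcase_z r1 n1 r2 n2 (H1 : 'M['F_2]_(r1,n1)) (H2 : 'M['F_2]_(r2,n2)) ordX ordZ
  (fs : seq (fault (hxgen r1 n1 r2 n2) (hzgen r1 n1 r2 n2) (hqubit r1 n1 r2 n2)))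
  (z : 'rV_r2) :
  valid_order (HX H1 H2) ordX -> all_admissible ordX ordZ fs ->
  H2 *m (Ebm (total_error fs).1)^T = (Ecm (total_error fs).1)^T *m H1 ->
  z *m H2 = 0 -> z *m (Ecm (total_error fs).1)^T != 0 ->
  exists v, nontrivial_logical (HX H1 H2) (HZ H1 H2) v /\ (weight v <= size fs)%N.
Proof.
move=> vo adm hk Hz Hne.
set e := (total_error fs).1 in hk Hne.
set w := z *m (Ecm e)^T.
have [i0 Hi0] := exists_nz_row Hne.
have [j0 Hj0] : exists j0, z 0 j0 != 0.
  case: (pickP (fun j => z 0 j != 0)) => [j hj|H]; first by exists j.
  move: Hi0; rewrite /w mxE big1 ?eqxx // => j _.
  by move: (H j) => /negbFE/eqP ->; rewrite mul0r.
have Hw : w *m H1 = 0 by rewrite /w -mulmxA -hk mulmxA Hz mul0mx.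
pose v : {ffun hqubit r1 n1 r2 n2 -> 'F_2} := [ffun q =>
  match q with inr (i,j) => w 0 i * (j == j0)%:R | inl _ => 0 end].
pose l : {ffun hqubit r1 n1 r2 n2 -> 'F_2} := [ffun q =>
  match q with inr (i,j) => (i == i0)%:R * z 0 j | inl _ => 0 end].
exists v; split.
  right; split.
    move=> [a j]; rewrite sumQ /= [X in X + _]big1 ?add0r => [|a' _]; last first.
      by apply: big1 => b _; rewrite ffunE mulr0.
    transitivity (\sum_i w 0 i * H1 i a * (j == j0)%:R).
      apply: eq_bigr => i _; rewrite (sum_one j) ?ffunE ?eqxx ?b2R1 ?mulr1 // => [|j' nj].
        by rewrite mulrA [H1 i a * _]mulrC.
      by rewrite eq_sym (negbTE nj) mulr0 mul0r.
    rewrite -mulr_suml; have := congr1 (fun M : 'M['F_2]_(1,n1) => M 0 a) Hw.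
    by rewrite !mxE => ->; rewrite mul0r.
  apply: (nontriv_pair (l:=l)).
    move=> [i b]; rewrite sumQ /= [X in X + _]big1 ?add0r => [|a _]; last first.
      by apply: big1 => b' _; rewrite ffunE mulr0.
    rewrite (sum_one i) => [|i' ni]; last first.
      by apply: big1 => j _; rewrite eq_sym (negbTE ni) !mul0r.
    rewrite eqxx b2R1.
    under eq_bigr do rewrite ffunE mul1r mulrCA.
    rewrite -mulr_sumr; have := congr1 (fun M : 'M['F_2]_(1,n2) => M 0 b) Hz.
    rewrite !mxE => H; rewrite (eq_bigr (fun j => z 0 j * H2 j b)) ?H ?mulr0 //.
    by move=> j _; rewrite mulrC.
  rewrite sumQ /= [X in X + _]big1 ?add0r => [|a _]; last first.
    by apply: big1 => b _; rewrite !ffunE mulr0.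
  rewrite (sum_one i0) => [|i' ni]; last first.
    by apply: big1 => j _; rewrite !ffunE (negbTE ni) !mul0r mulr0.
  rewrite (sum_one j0) => [|j' nj]; last first.
    by rewrite !ffunE (negbTE nj) !mulr0 mul0r.
  by rewrite !ffunE !eqxx !b2R1 mulr1 mul1r (f2_neq0 Hj0) (f2_neq0 Hi0) mulr1.
pose L : 'I_r1 -> hqubit r1 n1 r2 n2 -> 'F_2 := fun i q =>
  match q with inr (i',j) => (i' == i)%:R * z 0 j | inl _ => 0 end.
have cnt := @count_supp _ _ _ _ ordX ordZ fs (fun f => (fault_error f).1) L.
have hxL : forall i, w 0 i = \sum_q (\sum_(f <- fs) (fault_error f).1) q * L i q.
  move=> i; rewrite sumQ /= [X in X + _]big1 ?add0r => [|a _]; last first.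
    by apply: big1 => b _; rewrite mulr0.
  rewrite (sum_one i) => [|i' ni]; last first.
    by apply: big1 => j _; rewrite (negbTE ni) mul0r mulr0.
  rewrite /w mxE; apply: eq_bigr => j _.
  by rewrite ?eqxx ?b2R1 mul1r !mxE mulrC.
have sub : [set q | v q != 0] \subset
   (fun i => (inr (i,j0) : hqubit r1 n1 r2 n2)) @: [set i | w 0 i != 0].
  apply/subsetP => -[[a b]|[i j]]; rewrite inE ffunE //=.
  case: (eqVneq j j0) => [->|nj]; last by rewrite mulr0 eqxx.
  rewrite ?eqxx ?b2R1 mulr1 => hx; apply/imsetP; exists i => //; by rewrite inE.
rewrite /weight (leq_trans (subset_leq_card sub)) // (leq_trans (leq_imset_card _ _)) //.
have -> : [set i | w 0 i != 0] =
   [set k | \sum_q (\sum_(f <- fs) (fault_error f).1) q * L k q != 0].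
  by apply/setP => i; rewrite !inE hxL.
apply: cnt => //.
apply: (cond_X vo).
  move=> k k' [[a b]|[i j]] //=.
  rewrite mulf_eq0 negb_or => /andP[/eqP h _]; rewrite mulf_eq0 negb_or => /andP[/eqP h' _].
  by move: h h'; case: eqP => // ->; case: eqP.
move=> g k k' [[a b]|[i j]] [[a' b']|[i' j']] //=.
rewrite !mulf_eq0 !negb_or => /andP[/eqP h1 _] /andP[/eqP h2 _] /andP[/eqP h3 _] /andP[/eqP h4 _].
move: h1 h2 h3 h4; do 4 case: eqP => //; by move=> -> -> -> .
Qed.

Lemma Zbound r1 n1 r2 n2 (H1 : 'M['F_2]_(r1,n1)) (H2 : 'M['F_2]_(r2,n2)) ordX ordZ
  (fs : seq (fault (hxgen r1 n1 r2 n2) (hzgen r1 n1 r2 n2) (hqubit r1 n1 r2 n2))) :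
  valid_order (HZ H1 H2) ordZ -> all_admissible ordX ordZ fs ->
  in_ker (HX H1 H2) (total_error fs).2 -> ~ in_imT (HZ H1 H2) (total_error fs).2 ->
  exists v, nontrivial_logical (HX H1 H2) (HZ H1 H2) v /\ (weight v <= size fs)%N.
Proof.
move=> vo adm hker hnot; have hk := kerX_mx hker.
case: (classic (exists y : 'cV_n2, H2 *m y = 0 /\ Ebm (total_error fs).2 *m y != 0)).
  by move=> [y [Hy Hne]]; apply: (Zcase_y vo adm hk Hy Hne).
move=> noy.
case: (classic (exists z : 'rV_r1, z *m H1 = 0 /\ z *m Ecm (total_error fs).2 != 0)).
  by move=> [z [Hz Hne]]; apply: (Zcase_z vo adm hk Hz Hne).
move=> noz; exfalso; apply: hnot.
have hy : forall y : 'cV_n2, H2 *m y = 0 -> Ebm (total_error fs).2 *m y = 0.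
  move=> y Hy; apply/eqP; apply: contraT => Hne; exfalso; apply: noy; by exists y.
have hz : forall z : 'rV_r1, z *m H1 = 0 -> z *m Ecm (total_error fs).2 = 0.
  move=> z Hz; apply/eqP; apply: contraT => Hne; exfalso; apply: noz; by exists z.
have [A [EA EC]] := core hk hy hz.
exists [ffun c : hzgen r1 n1 r2 n2 => A c.1 c.2] => -[[a b]|[i j]]; rewrite sumP2.
  rewrite (sum_one a) => [|a' na]; last first.
    by apply: big1 => j _; rewrite /= (negbTE na) mul0r mulr0.
  have := congr1 (fun M : 'M['F_2]_(n1,n2) => M a b) EA; rewrite !mxE => ->.
  by apply: eq_bigr => j _; rewrite ffunE /= eqxx b2R1 mul1r.
have := congr1 (fun M : 'M['F_2]_(r1,r2) => M i j) EC; rewrite !mxE => ->.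
apply: eq_bigr => a _; rewrite (sum_one j) => [|j' nj]; last first.
  by rewrite /= (negbTE nj) !mulr0.
by rewrite ffunE /= eqxx b2R1 mulr1 mulrC.
Qed.

Lemma Xbound r1 n1 r2 n2 (H1 : 'M['F_2]_(r1,n1)) (H2 : 'M['F_2]_(r2,n2)) ordX ordZ
  (fs : seq (fault (hxgen r1 n1 r2 n2) (hzgen r1 n1 r2 n2) (hqubit r1 n1 r2 n2))) :
  valid_order (HX H1 H2) ordX -> all_admissible ordX ordZ fs ->
  in_ker (HZ H1 H2) (total_error fs).1 -> ~ in_imT (HX H1 H2) (total_error fs).1 ->
  exists v, nontrivial_logical (HX H1 H2) (HZ H1 H2) v /\ (weight v <= size fs)%N.
Proof.
move=> vo adm hker hnot; have hk := kerZ_mx hker.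
case: (classic (exists y : 'cV_n1, H1 *m y = 0 /\ (Ebm (total_error fs).1)^T *m y != 0)).
  by move=> [y [Hy Hne]]; apply: (Xcase_y vo adm hk Hy Hne).
move=> noy.
case: (classic (exists z : 'rV_r2, z *m H2 = 0 /\ z *m (Ecm (total_error fs).1)^T != 0)).
  by move=> [z [Hz Hne]]; apply: (Xcase_z vo adm hk Hz Hne).
move=> noz; exfalso; apply: hnot.
have hy : forall y : 'cV_n1, H1 *m y = 0 -> (Ebm (total_error fs).1)^T *m y = 0.
  move=> y Hy; apply/eqP; apply: contraT => Hne; exfalso; apply: noy; by exists y.
have hz : forall z : 'rV_r2, z *m H2 = 0 -> z *m (Ecm (total_error fs).1)^T = 0.
  move=> z Hz; apply/eqP; apply: contraT => Hne; exfalso; apply: noz; by exists z.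
have [A [EA EC]] := core hk hy hz.
exists [ffun c : hxgen r1 n1 r2 n2 => A c.2 c.1] => -[[a b]|[i j]]; rewrite sumP2.
  have := congr1 (fun M : 'M['F_2]_(n2,n1) => M b a) EA; rewrite !mxE => ->.
  apply: eq_bigr => i _; rewrite (sum_one b) => [|b' nb]; last first.
    by rewrite /= (negbTE nb) !mulr0.
  by rewrite ffunE /= eqxx b2R1 mulr1.
rewrite (sum_one i) => [|i' ni]; last first.
  by apply: big1 => b _; rewrite /= (negbTE ni) mul0r mulr0.
have := congr1 (fun M : 'M['F_2]_(r2,r1) => M j i) EC; rewrite !mxE => ->.
by apply: eq_bigr => b _; rewrite ffunE /= eqxx b2R1 mul1r mulrC.
Qed.

Lemma adm_dataZ (CX CZ Q : finType) (ordX : CX -> seq Q) (ordZ : CZ -> seq Q) (s : seq Q) :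
  all_admissible ordX ordZ (map (@DataZ CX CZ Q) s).
Proof. by elim: s => //= q s ->. Qed.

Lemma adm_dataX (CX CZ Q : finType) (ordX : CX -> seq Q) (ordZ : CZ -> seq Q) (s : seq Q) :
  all_admissible ordX ordZ (map (@DataX CX CZ Q) s).
Proof. by elim: s => //= q s ->. Qed.

Lemma sum_indic (Q : finType) (v : {ffun Q -> 'F_2}) :
  \sum_(q <- enum [set q | v q != 0]) indic [set q] = v.
Proof.
apply/ffunP => p; rewrite sum_ffunE big_enum /=.
case: (eqVneq (v p) 0) => [vp|vp].
  rewrite vp; apply: big1 => q; rewrite inE ffunE inE => hq.
  case: (eqVneq p q) => [epq|//]; by move: hq; rewrite -epq vp eqxx.
rewrite (bigD1 p) ?inE //= big1 ?addr0.
  by rewrite ffunE inE eqxx (f2_neq0 vp).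
by move=> q /andP[_ nq]; rewrite ffunE inE eq_sym (negbTE nq).
Qed.

Lemma ker0 (C Q : finType) (h : C -> Q -> 'F_2) : in_ker h 0.
Proof. by move=> c; apply: big1 => q _; rewrite ffunE mulr0. Qed.

Theorem theorem2 (r1 n1 r2 n2 : nat)
  (H1 : 'M['F_2]_(r1, n1)) (H2 : 'M['F_2]_(r2, n2))
  (d : option nat) :
  code_distance (HX H1 H2) (HZ H1 H2) d ->
  forall (ordX : hxgen r1 n1 r2 n2 -> seq (hqubit r1 n1 r2 n2))
         (ordZ : hzgen r1 n1 r2 n2 -> seq (hqubit r1 n1 r2 n2)),
    valid_order (HX H1 H2) ordX ->
    valid_order (HZ H1 H2) ordZ ->
    effective_distance (HX H1 H2) (HZ H1 H2) ordX ordZ d.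
Proof.
move=> hd ordX ordZ voX voZ.
have lb : forall fs, all_admissible ordX ordZ fs ->
    undetectable_logical (HX H1 H2) (HZ H1 H2) (total_error fs) ->
    exists v, nontrivial_logical (HX H1 H2) (HZ H1 H2) v /\ (weight v <= size fs)%N.
  move=> fs adm [h1 [h2 [n1'|n2']]]; first exact: (Xbound voX adm h1 n1').
  exact: (Zbound voZ adm h2 n2').
have ub : forall v, nontrivial_logical (HX H1 H2) (HZ H1 H2) v ->
    exists fs : seq (fault (hxgen r1 n1 r2 n2) (hzgen r1 n1 r2 n2) (hqubit r1 n1 r2 n2)),
      size fs = weight v /\ all_admissible ordX ordZ fs /\
      undetectable_logical (HX H1 H2) (HZ H1 H2) (total_error fs).
  move=> v [[hk hn]|[hk hn]].
    exists (map (@DataZ _ _ _) (enum [set q | v q != 0])).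
    split; first by rewrite size_map /weight cardE.
    split; first exact: adm_dataZ.
    rewrite /undetectable_logical /total_error /= !big_map /=.
    rewrite sum_indic big1 // ; split; first exact: ker0.
    by split => //; right.
  exists (map (@DataX _ _ _) (enum [set q | v q != 0])).
  split; first by rewrite size_map /weight cardE.
  split; first exact: adm_dataX.
  rewrite /undetectable_logical /total_error /= !big_map /=.
  rewrite sum_indic big1 //; split => //; split; first exact: ker0.
  by left.
case: d hd => [m [[v [hv hw]] hmin] | hnone].
  split.
    have [fs [hs [adm und]]] := ub v hv; exists fs; by rewrite hs hw.
  move=> k [fs [<- [adm und]]]; have [v' [hv' hw']] := lb fs adm und.
  by apply: leq_trans hw'; apply: hmin; exists v'.
move=> k [fs [_ [adm und]]]; have [v' [hv' _]] := lb fs adm und.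
by apply: (hnone (weight v')); exists v'.
Qed.
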